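(* Let $\mathrm{k}\in\{\mathbb{R},\mathbb{C}\}$ and let $\mathcal{A}$ be a commutative unital Banach algebra over $\mathrm{k}$ whose only finite-dimensional subalgebra is $\mathrm{k}$. Then for all finite subsets $A,B$ of $\mathcal{A}$ with $\mathrm{k}\langle A\rangle\cap U(\mathcal{A})\neq\emptyset$ and $\mathrm{k}\langle B\rangle\cap U(\mathcal{A})\neq\emptyset$, $\dim_{\mathrm{k}}(AB)\geq\dim_{\mathrm{k}}(A)+\dim_{\mathrm{k}}(B)-1$.
   Context: Subalgebras contain $1$. $U(\mathcal{A})$ is the group of invertible elements, $\mathrm{k}\langle S\rangle$ the linear span of $S$, $\dim_{\mathrm{k}}(S)=\dim_{\mathrm{k}}\mathrm{k}\langle S\rangle$, and $AB=\{ab\mid a\in A,b\in B\}$. *)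

(* Defs.v *)
From HB Require Import structures.
From mathcomp Require Import all_boot all_order all_algebra.
From mathcomp Require Import all_classical all_reals all_analysis.
From mathcomp.real_closed Require Import complex.
Set Implicit Arguments. Unset Strict Implicit. Unset Printing Implicit Defensive.
Import Order.TTheory GRing.Theory Num.Theory.
Import numFieldNormedType.Exports.
Local Open Scope ring_scope.
Local Open Scope classical_set_scope.

Record comBanachAlg (K : numFieldType) (V : completeNormedModType K) := ComBanachAlg {
  bmul : V -> V -> V;
  bone : V;
  bmulA : forall x y z, bmul x (bmul y z) = bmul (bmul x y) z;
  bmulC : forall x y, bmul x y = bmul y x;
  bmul1 : forall x, bmul bone x = x;
  bmulDl : forall x y z, bmul (x + y) z = bmul x z + bmul y z;
  bmulZl : forall (a : K) x y, bmul (a *: x) y = a *: bmul x y;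
  bnorm_mul : forall x y, `|bmul x y| <= `|x| * `|y|;
  bnorm_one : `|bone| = 1
}.

Section Defs.
Variables (K : numFieldType) (V : lmodType K).

Definition kspan (S : seq V) : set V :=
  [set v | exists c : 'I_(size S) -> K, v = \sum_(i < size S) c i *: S`_i].

Definition lin_indep (S : seq V) : Prop :=
  forall c : 'I_(size S) -> K, \sum_(i < size S) c i *: S`_i = 0 -> forall i, c i = 0.

Definition has_dim (X : set V) (n : nat) : Prop :=
  exists b : seq V, [/\ size b = n, lin_indep b & kspan b = X].

Definition vdim (X : set V) : nat := xget 0%N (has_dim X).

Definition dimk (S : seq V) : nat := vdim (kspan S).

End Defs.

Section AlgDefs.
Variables (K : numFieldType) (V : completeNormedModType K) (M : comBanachAlg V).
Local Notation "x * y" := (bmul M x y).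
Local Notation "1" := (bone M).

Definition is_unit (x : V) : Prop := exists y : V, x * y = 1.

Definition subalgebra (S : set V) : Prop :=
  [/\ S 1, (forall x y, S x -> S y -> S (x + y)),
      (forall (a : K) x, S x -> S (a *: x)) & (forall x y, S x -> S y -> S (x * y))].

Definition fin_dim (S : set V) : Prop := exists s : seq V, kspan s = S.

Definition only_fd_subalg_is_k : Prop :=
  forall S : set V, subalgebra S -> fin_dim S -> S = kspan [:: 1].

Definition prodset (A B : seq V) : seq V := [seq a * b | a <- A, b <- B].

End AlgDefs.

(* Main.v *)
Require Import Defs.
From HB Require Import structures.
From mathcomp Require Import all_boot all_order all_algebra.
From mathcomp Require Import all_classical all_reals all_analysis.
From mathcomp.real_closed Require Import complex.
From mathcomp Require Import zify.
Set Implicit Arguments. Unset Strict Implicit. Unset Printing Implicit Defensive.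
Import Order.TTheory GRing.Theory Num.Theory.
Local Open Scope ring_scope.
Local Open Scope classical_set_scope.
Local Open Scope complex_scope.

Definition lc (K : numFieldType) (V : lmodType K) (c : nat -> K) (s : seq V) : V :=
  \sum_(i < size s) c i *: s`_i.

Section Lin.
Variables (K : numFieldType) (V : lmodType K).
Implicit Types (s t z b : seq V) (Z X Y : set V).

Definition subsp (X : set V) := [/\ X 0, (forall x y, X x -> X y -> X (x + y)) &
  (forall (a : K) x, X x -> X (a *: x))].

Definition spanl s : set V := fun x => exists c, x = lc c s.
Definition zspan Z s : set V := fun x => exists c, Z (x - lc c s).
Definition indepm Z s := forall c, Z (lc c s) -> forall i, (i < size s)%N -> c i = 0.

Lemma subspN X x : subsp X -> X x -> X (- x).
Proof. by case=> _ _ hZ hx; rewrite -scaleN1r; apply: hZ. Qed.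
Lemma subspB X x y : subsp X -> X x -> X y -> X (x - y).
Proof. move=> hX hx hy; case: (hX) => _ hD _; apply: hD => //; exact: subspN. Qed.

Lemma lc_cons c y s : lc c (y :: s) = c 0%N *: y + lc (fun i => c i.+1) s.
Proof. by rewrite /lc /= big_ord_recl. Qed.
Lemma lc_nil c : lc c ([::] : seq V) = 0.
Proof. by rewrite /lc big_ord0. Qed.
Lemma lcD c d s : lc c s + lc d s = lc (fun i => c i + d i) s.
Proof. by rewrite /lc -big_split; apply: eq_bigr => i _; rewrite scalerDl. Qed.
Lemma lcZ a c s : a *: lc c s = lc (fun i => a * c i) s.
Proof. by rewrite /lc scaler_sumr; apply: eq_bigr => i _; rewrite scalerA. Qed.
Lemma lcN c s : - lc c s = lc (fun i => - c i) s.
Proof. by rewrite -scaleN1r lcZ; congr lc; apply/funext => i; rewrite mulN1r. Qed.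
Lemma lc0 s : lc (fun=> 0) s = 0.
Proof. by rewrite /lc big1 // => i _; rewrite scale0r. Qed.
Lemma lc_ext c d s : (forall i, (i < size s)%N -> c i = d i) -> lc c s = lc d s.
Proof. by move=> h; apply: eq_bigr => i _; rewrite h. Qed.

Lemma subsp_lc X c s : subsp X -> (forall i, (i < size s)%N -> X s`_i) -> X (lc c s).
Proof.
case=> h0 hD hZ hs; rewrite /lc; elim/big_ind: _ => // i _; exact/hZ/hs.
Qed.

Lemma kspanE s : kspan s = spanl s.
Proof.
apply/funext => x; apply/propext; split=> [[c ->]|[c ->]].
  exists (fun k => if insub k is Some i then c i else 0).
  by apply: eq_bigr => i _; rewrite valK.
by exists (fun i => c i).
Qed.

Lemma lin_indepE s : lin_indep s <-> indepm [set 0] s.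
Proof.
split=> [h c hc i lti|h c hc i].
  have := h (fun k => c k) hc (Ordinal lti); done.
have := h (fun k => if insub k is Some j then c j else 0) _ i (ltn_ord i).
rewrite valK; apply.
change (lc (fun k => if insub k is Some j then c j else 0) s = 0).
rewrite -[RHS]hc; apply: eq_bigr => j _; by rewrite valK.
Qed.


Lemma lc_map (W : lmodType K) (f : V -> W) c s :
  (forall x y, f (x + y) = f x + f y) -> (forall (a : K) x, f (a *: x) = a *: f x) ->
  f (lc c s) = lc c (map f s).
Proof.
move=> fD fZ; have f0 : f 0 = 0 by rewrite -(scale0r 0) fZ scale0r.
rewrite /lc (big_morph f fD f0) size_map; apply: eq_bigr => i _.
by rewrite fZ (nth_map 0).
Qed.

Lemma steinitz s t : indepm [set 0] t -> (forall j, (j < size t)%N -> spanl s t`_j) ->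
  (size t <= size s)%N.
Proof.
move=> ht hs; rewrite leqNgt; apply/negP => lt.
have: forall j : nat, exists c, (j < size t)%N -> t`_j = lc c s.
  move=> j; case: (ltnP j (size t)) => hj; last by exists (fun=> 0).
  by have [c hc] := hs j hj; exists c.
case/choice => F hF.
pose Mx : 'M[K]_(size t, size s) := \matrix_(j, i) F j i.
have kn0 : kermx Mx != 0.
  apply/eqP => k0; have := mxrank_ker Mx; rewrite k0 mxrank0 => /esym/eqP.
  rewrite subn_eq0 => h; have := leq_trans h (rank_leq_col Mx).
  by rewrite leqNgt lt.
have [r wn0] : exists r, row r (kermx Mx) != 0.
  have [//|hall] := pselect (exists r, row r (kermx Mx) != 0).
  move/negP: kn0; case; apply/eqP/row_matrixP => r.
  rewrite row0; apply/eqP/negPn/negP => h; apply: hall; by exists r.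
set w := row r (kermx Mx) in wn0.
have w0 : w *m Mx = 0 by rewrite /w -row_mul mulmx_ker row0.
pose c j := if insub j is Some jj then w 0 jj else 0.
have : lc c t = 0.
  rewrite /lc.
  transitivity (\sum_(j < size t) \sum_(i < size s) (w 0 j * F j i) *: s`_i).
    apply: eq_bigr => j _; rewrite /c valK (hF j (ltn_ord j)) /lc scaler_sumr.
    by apply: eq_bigr => i _; rewrite scalerA.
  rewrite exchange_big /=; apply: big1 => i _; rewrite -scaler_suml.
  suff -> : \sum_(j < size t) w 0 j * F j i = 0 by rewrite scale0r.
  have := congr1 (fun M : 'M[K]_(1, size s) => M 0 i) w0; rewrite !mxE => h.
  rewrite -[RHS]h; apply: eq_bigr => j _; by rewrite /Mx !mxE.
move/ht => hc; move/negP: wn0; apply; apply/eqP/rowP => j.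
rewrite [RHS]mxE; have := hc j (ltn_ord j); by rewrite /c valK.
Qed.


Lemma subsp0 : subsp [set (0 : V)].
Proof. by split=> [//|x y -> ->|a x ->]; rewrite ?addr0 ?scaler0. Qed.

Lemma subsp_spanl s : subsp (spanl s).
Proof.
split; first by exists (fun=> 0); rewrite lc0.
  by move=> x y [c ->] [d ->]; exists (fun i => c i + d i); rewrite lcD.
by move=> a x [c ->]; exists (fun i => a * c i); rewrite lcZ.
Qed.

Lemma spanl_nth s i : (i < size s)%N -> spanl s s`_i.
Proof.
move=> hi; exists (fun k => (k == i)%:R); rewrite /lc (bigD1 (Ordinal hi)) //=.
rewrite eqxx scale1r big1 ?addr0 // => j hj.
by rewrite (_ : (nat_of_ord j == i) = false) ?scale0r //; apply/negbTE; move: hj; apply: contra => /eqP h; apply/eqP/val_inj.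
Qed.

Lemma spanl_mem s x : x \in s -> spanl s x.
Proof. by move=> hx; rewrite -(nth_index 0 hx); apply: spanl_nth; rewrite index_mem. Qed.

Lemma spanl_sub X s : subsp X -> (forall i, (i < size s)%N -> X s`_i) -> spanl s `<=` X.
Proof. by move=> hX hs x [c ->]; apply: subsp_lc. Qed.

Lemma subsp_zspan Z s : subsp Z -> subsp (zspan Z s).
Proof.
move=> hZ; case: (hZ) => h0 hD hS; split.
- by exists (fun=> 0); rewrite lc0 subr0.
- move=> x y [c hc] [d hd]; exists (fun i => c i + d i); rewrite -lcD.
  rewrite (_ : _ - _ = (x - lc c s) + (y - lc d s)); first exact: hD.
  by rewrite opprD addrACA.
- move=> a x [c hc]; exists (fun i => a * c i); rewrite -lcZ -scalerBr; exact: hS.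
Qed.

Lemma zspan_ge Z s : Z `<=` zspan Z s.
Proof. by move=> x hx; exists (fun=> 0); rewrite lc0 subr0. Qed.

Lemma zspan0 s : zspan [set 0] s = spanl s.
Proof.
apply/funext => x; apply/propext; split=> [[c /= /eqP]|[c ->]].
  by rewrite subr_eq0 => /eqP ->; exists c.
by exists c; rewrite /= subrr.
Qed.

Lemma zspan_sub X Z s : subsp X -> Z `<=` X -> (forall i, (i < size s)%N -> X s`_i) ->
  zspan Z s `<=` X.
Proof.
move=> hX hZX hs x [c hc]; rewrite -(subrK (lc c s) x).
case: (hX) => h0 hD hS; apply: hD; first exact: hZX.
by apply: subsp_lc.
Qed.

Lemma indepm0 Z s : subsp Z -> indepm Z s -> indepm [set 0] s.
Proof. by case=> h0 _ _ h c hc; apply: h; rewrite hc. Qed.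

Lemma indepm_cons Z s y : subsp Z -> indepm Z s -> ~ zspan Z s y -> indepm Z (y :: s).
Proof.
move=> hZ hs hy c; rewrite lc_cons => hc.
have [c0|c0] := eqVneq (c 0%N) 0.
  move: hc; rewrite c0 scale0r add0r => /hs hc'.
  by case=> [|i] //= hi; apply: hc'.
exfalso; apply: hy; exists (fun i => - ((c 0%N)^-1 * c i.+1)).
rewrite -lcN opprK -lcZ.
have := hZ; case=> _ _ hS; have := hS (c 0%N)^-1 _ hc.
by rewrite scalerDr scalerA mulVf // scale1r.
Qed.

Lemma greedy Z Y s0 : subsp Z -> subsp Y -> Z `<=` Y -> Y `<=` spanl s0 ->
  exists z, [/\ indepm Z z, (forall i, (i < size z)%N -> Y z`_i) & zspan Z z = Y].
Proof.
move=> hZ hY hZY hYs.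
suff H : forall n z, (size s0 - size z <= n)%N -> indepm Z z ->
    (forall i, (i < size z)%N -> Y z`_i) ->
    exists z, [/\ indepm Z z, (forall i, (i < size z)%N -> Y z`_i) & zspan Z z = Y].
  by apply: (H (size s0) [::]) => //; rewrite subn0.
elim=> [|n IH] z hn hz hzY.
all: have [hsp|hns] := pselect (forall y, Y y -> zspan Z z y);
  [by exists z; split=> //; apply/seteqP; split=> //; apply: zspan_sub|].
all: have [y [hy hny]] : exists y, Y y /\ ~ zspan Z z y by
  apply: contrapT => hne; apply: hns => y hy; apply: contrapT => hny; apply: hne; exists y.
all: have hz' := indepm_cons hZ hz hny.
all: have hzY' : forall i, (i < size (y :: z))%N -> Y (y :: z)`_i by
  case=> [|i] //= hi; apply: hzY.
all: have := steinitz (indepm0 hZ hz') (fun j hj => hYs _ (hzY' j hj)); rewrite /= => hsz.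
  exfalso; lia.
apply: (IH (y :: z)) => //=; lia.
Qed.

Lemma has_dimE X n : has_dim X n <-> exists b, [/\ size b = n, indepm [set 0] b & spanl b = X].
Proof.
split=> [[b [h1 h2 h3]]|[b [h1 h2 h3]]]; exists b; split=> //.
- exact/lin_indepE.
- by rewrite -kspanE.
- exact/lin_indepE.
- by rewrite kspanE.
Qed.

Lemma dim_uniq X n m : has_dim X n -> has_dim X m -> n = m.
Proof.
move=> /has_dimE [b [<- hb eb]] /has_dimE [b' [<- hb' eb']].
apply/eqP; rewrite eqn_leq; apply/andP; split; apply: steinitz => // j hj.
  by rewrite eb' -eb; apply: spanl_nth.
by rewrite eb -eb'; apply: spanl_nth.
Qed.

Lemma vdim_eq X n : has_dim X n -> vdim X = n.
Proof.
move=> h; rewrite /vdim; apply: (dim_uniq _ h).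
by apply: (xgetPex 0%N); exists n.
Qed.

Lemma fd_sub Y s : subsp Y -> Y `<=` spanl s -> exists n, has_dim Y n /\ (n <= size s)%N.
Proof.
move=> hY hYs.
have [z [hz hzY ez]] := greedy subsp0 hY (fun x (hx : x = 0) => let: And3 h _ _ := hY in eq_ind_r Y h hx) hYs.
exists (size z); split.
  by apply/has_dimE; exists z; split=> //; rewrite -zspan0.
apply: steinitz => // j hj; exact/hYs/hzY.
Qed.

Lemma zspan_nil Z : subsp Z -> zspan Z [::] = Z.
Proof.
move=> hZ; apply/seteqP; split; last exact: zspan_ge.
by move=> x [c]; rewrite lc_nil subr0.
Qed.

Lemma zspan_cons Z y z : zspan Z (y :: z) = zspan (zspan Z [:: y]) z.
Proof.
apply/funext => x; apply/propext; split=> [[c hc]|[d [e he]]].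
  exists (fun i => c i.+1); exists c.
  have -> : lc c [:: y] = c 0%N *: y by rewrite /lc /= big_ord1.
  by move: hc; rewrite lc_cons opprD addrA addrAC.
exists (fun i => if i is i'.+1 then d i' else e 0%N).
move: he; have -> : lc e [:: y] = e 0%N *: y by rewrite /lc /= big_ord1.
by rewrite lc_cons opprD addrA addrAC.
Qed.

Lemma has_dim_cons Z n y : subsp Z -> has_dim Z n -> ~ Z y -> has_dim (zspan Z [:: y]) n.+1.
Proof.
move=> hZ /has_dimE [b [hb ib eb]] hy; apply/has_dimE; exists (y :: b); split.
- by rewrite /= hb.
- by apply: indepm_cons subsp0 ib _; rewrite zspan0 eb.
- apply/funext => x; apply/propext; split=> [[c ->]|[e he]].
    exists (fun=> c 0%N); rewrite lc_cons /lc /= big_ord1 /= addrC addKr -/(lc _ b).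
    by rewrite -eb; exists (fun i => c i.+1).
  move: he; rewrite /lc /= big_ord1 /=; rewrite -eb => -[d hd].
  exists (fun i => if i is i'.+1 then d i' else e 0%N); rewrite lc_cons /= -hd.
  by rewrite addrC subrK.
Qed.

Lemma dim_ext Z n z : subsp Z -> has_dim Z n -> indepm Z z -> has_dim (zspan Z z) (n + size z).
Proof.
elim: z Z n => [|y z IH] Z n hZ hd hi; first by rewrite zspan_nil // addn0.
rewrite zspan_cons /= addnS -addSn; apply: IH.
- exact: subsp_zspan.
- apply: has_dim_cons => // hy.
  have := hi (fun i => (i == 0%N)%:R); rewrite lc_cons /= scale1r.
  rewrite (_ : lc _ z = 0) ?addr0; last by rewrite -(lc0 z); apply: lc_ext.
  by move=> /(_ hy 0%N isT) /eqP; rewrite oner_eq0.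
- move=> d [e he] i hi'.
  have := hi (fun i => if i is i'.+1 then d i' else - e 0%N); rewrite lc_cons /=.
  move: he; rewrite /lc /= big_ord1 /= => he.
  by rewrite scaleNr addrC; move/(_ he i.+1 hi').
Qed.

End Lin.

Section Alg.
Variables (K : numFieldType) (V : completeNormedModType K) (M : comBanachAlg V).
Local Notation mul := (bmul M).
Local Notation one := (bone M).

Lemma mulr1' x : mul x one = x.
Proof. by rewrite bmulC bmul1. Qed.
Lemma mulDr' x y z : mul x (y + z) = mul x y + mul x z.
Proof. by rewrite bmulC bmulDl !(bmulC M _ x). Qed.
Lemma mulZr' (a : K) x y : mul x (a *: y) = a *: mul x y.
Proof. by rewrite bmulC bmulZl bmulC. Qed.
Lemma mul0l' x : mul 0 x = 0.
Proof. by have := bmulZl M 0 0 x; rewrite !scale0r. Qed.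
Lemma mul0r' x : mul x 0 = 0.
Proof. by rewrite bmulC mul0l'. Qed.
Lemma mulACA' a b c d : mul (mul a b) (mul c d) = mul (mul a c) (mul b d).
Proof. by rewrite -bmulA (bmulA M b c d) (bmulC M b c) -bmulA bmulA. Qed.

Lemma mul_lc_r x c s : mul x (lc c s) = lc c (map (mul x) s).
Proof. by apply: lc_map => *; rewrite ?mulDr' ?mulZr'. Qed.
Lemma mul_lc_l x c s : mul (lc c s) x = lc c (map (mul^~ x) s).
Proof. by apply: lc_map => [y z|a y]; rewrite ?bmulDl ?bmulZl. Qed.

Lemma spanl_map (f : V -> V) s x : (forall x y, f (x + y) = f x + f y) ->
  (forall (a : K) x, f (a *: x) = a *: f x) ->
  spanl (map f s) x <-> exists y, spanl s y /\ x = f y.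
Proof.
move=> fD fZ; split=> [[c ->]|[y [[c ->] ->]]].
  by exists (lc c s); split; [exists c|rewrite lc_map].
by exists c; rewrite lc_map.
Qed.

Lemma prod_span A B x y : spanl A x -> spanl B y -> spanl (prodset M A B) (mul x y).
Proof.
move=> [c ->] [d ->]; rewrite mul_lc_l; apply: subsp_lc; first exact: subsp_spanl.
move=> i; rewrite size_map => hi; rewrite (nth_map 0) // mul_lc_r.
apply: subsp_lc; first exact: subsp_spanl.
move=> j; rewrite size_map => hj; rewrite (nth_map 0) //.
by apply: spanl_mem; apply: allpairs_f; apply: mem_nth.
Qed.

Lemma prod_sub A B S : subsp S -> (forall a b, a \in A -> b \in B -> S (mul a b)) ->
  spanl (prodset M A B) `<=` S.
Proof.
move=> hS h; apply: spanl_sub => // i hi.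
by have /allpairsP [[a b] [/= ha hb ->]] := mem_nth 0 hi; apply: h.
Qed.

Lemma core (hfd : only_fd_subalg_is_k M) n : forall A B, spanl A one -> spanl B one ->
  has_dim (spanl B) n ->
  (vdim (spanl A) + n <= vdim (spanl (prodset M A B)) + 1)%N.
Proof.
elim/ltn_ind: n => n IH A B hA hB hdB.
set X := spanl A; set Y := spanl B; set P := spanl (prodset M A B).
have sX : subsp X := subsp_spanl A.
have sY : subsp Y := subsp_spanl B.
have sP : subsp P := subsp_spanl _.
have [nx [hdX _]] := fd_sub sX (fun x hx => hx).
have [np [hdP _]] := fd_sub sP (fun x hx => hx).
have [bp [hbp _ ebp]] := (has_dimE _ _).1 hdP.
rewrite (vdim_eq hdX) (vdim_eq hdP).
have [[a [y0 [hXa hYy0 hna]]] | hcase] :=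
  pselect (exists a y, [/\ X a, Y y & ~ X (mul a y)]).
  pose Y' := [set y | Y y /\ X (mul a y)].
  have sY' : subsp Y'.
    case: sY => Y0 YD YZ; case: (sX) => X0 XD XZ; split.
    - by split=> //; rewrite mul0r'.
    - by move=> x y [h1 h2] [h3 h4]; split; [apply: YD|rewrite mulDr'; apply: XD].
    - by move=> c x [h1 h2]; split; [apply: YZ|rewrite mulZr'; apply: XZ].
  have Y'Y : Y' `<=` Y by move=> y [].
  have [z [hz hzY ez]] := greedy sY' sY Y'Y (fun x hx => hx).
  have [n' [hdY' _]] := fd_sub sY' Y'Y.
  have := dim_ext sY' hdY' hz; rewrite ez => hdY2.
  have en := dim_uniq hdB hdY2.
  have zpos : (0 < size z)%N.
    case: z hz hzY ez {hdY2 en} => [|? ?] //= _ _; rewrite zspan_nil // => eY.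
    have [_ hy] : Y' y0 by rewrite eY.
    by case: hna.
  pose az := map (mul a) z.
  have haz : indepm X az.
    move=> c hc i; rewrite size_map => hi; apply: hz hi; split.
      by apply: subsp_lc.
    by rewrite mul_lc_r.
  have := dim_ext sX hdX haz; rewrite size_map => /has_dimE [A' [hA' iA' eA']].
  have [B' [hB' iB' eB']] := (has_dimE _ _).1 hdY'.
  have ltn' : (n' < n)%N by rewrite en; lia.
  have hB'1 : spanl B' one by rewrite eB'; split=> //; rewrite mulr1'.
  have hA'1 : spanl A' one by rewrite eA'; apply: zspan_ge.
  have hdB' : has_dim (spanl B') n' by rewrite eB'.
  have := IH n' ltn' A' B' hA'1 hB'1 hdB'.
  have hdA' : has_dim (spanl A') (nx + size z) by apply/has_dimE; exists A'.
  rewrite (vdim_eq hdA').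
  have sub : spanl (prodset M A' B') `<=` spanl bp.
    rewrite ebp; apply: prod_sub => // a' b' ha' hb'.
    have := spanl_mem ha'; rewrite eA' => -[c hc].
    have := spanl_mem hb'; rewrite eB' => -[hYb hXab].
    rewrite -(subrK (lc c az) a') bmulDl; case: (sP) => _ PD _; apply: PD.
      exact: prod_span.
    rewrite -mul_lc_r -bmulA (bmulC M (lc c z)) bmulA.
    apply: prod_span => //; by apply: subsp_lc.
  have [m [hm lem]] := fd_sub (subsp_spanl _) sub.
  rewrite (vdim_eq hm); lia.
have hstab : forall a y, X a -> Y y -> X (mul a y).
  move=> a y ha hy; apply: contrapT => hn; apply: hcase; by exists a, y.
pose H := [set h | forall x, X x -> X (mul h x)].
have subH : subalgebra M H.
  case: (sX) => X0 XD XZ; split.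
  - by move=> x hx; rewrite bmul1.
  - by move=> h g hh hg x hx; rewrite bmulDl; apply: XD; [apply: hh|apply: hg].
  - by move=> c h hh x hx; rewrite bmulZl; apply: XZ; apply: hh.
  - by move=> h g hh hg x hx; rewrite -bmulA; apply: hh; apply: hg.
have HX : H `<=` X by move=> h hh; rewrite -(mulr1' h); apply: hh.
have sH : subsp H.
  case: (sX) => X0 XD XZ; case: subH => _ HD HZ _; split=> //.
  by move=> x hx; rewrite mul0l'.
have [mh [hdH _]] := fd_sub sH HX.
have [bh [_ _ ebh]] := (has_dimE _ _).1 hdH.
have finH : fin_dim H by exists bh; rewrite kspanE.
have eH := hfd H subH finH.
have YH : Y `<=` spanl [:: one].
  rewrite -kspanE -eH => y hy x hx; rewrite bmulC; exact: hstab.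
have [m1 [hm1 lem1]] := fd_sub sY YH.
have en := dim_uniq hdB hm1.
have XP : X `<=` spanl bp.
  rewrite ebp => x hx; rewrite -(mulr1' x); exact: prod_span.
have [m2 [hm2 lem2]] := fd_sub sX XP.
have := dim_uniq hdX hm2; move: lem1 lem2 => /=; move=> h1 h2 h3; rewrite en h3 -hbp; exact: leq_add.
Qed.


Lemma dim_map_unit w w' s : mul w w' = one ->
  vdim (spanl (map (mul w) s)) = vdim (spanl s).
Proof.
move=> hw.
have fD : forall x y, mul w (x + y) = mul w x + mul w y by move=> *; rewrite mulDr'.
have fZ : forall (a : K) x, mul w (a *: x) = a *: mul w x by move=> *; rewrite mulZr'.
have [m [hm _]] := fd_sub (subsp_spanl s) (fun x hx => hx).
rewrite (vdim_eq hm); apply: vdim_eq.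
have [b [hb ib eb]] := (has_dimE _ _).1 hm.
apply/has_dimE; exists (map (mul w) b); split.
- by rewrite size_map.
- move=> c hc i; rewrite size_map; apply: ib.
  move: hc; rewrite /= -lc_map // => hc.
  by rewrite -[lc c b](bmul1 M) -hw (bmulC M w) -bmulA hc mul0r'.
- apply/funext => x; apply/propext.
  rewrite !spanl_map // eb; done.
Qed.

Lemma main_gen (hfd : only_fd_subalg_is_k M) A B :
  (exists u, kspan A u /\ is_unit M u) -> (exists v, kspan B v /\ is_unit M v) ->
  (dimk A + dimk B <= dimk (prodset M A B) + 1)%N.
Proof.
move=> [u [hu [u' hu']]] [v [hv [v' hv']]]; rewrite /dimk !kspanE.
have hu'' : mul u' u = one by rewrite bmulC.
have hv'' : mul v' v = one by rewrite bmulC.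
rewrite -(dim_map_unit A hu'') -(dim_map_unit B hv'').
have hw : mul (mul u' v') (mul u v) = one by rewrite mulACA' hu'' hv'' bmul1.
rewrite -(dim_map_unit (prodset M A B) hw).
have -> : map (mul (mul u' v')) (prodset M A B) =
          prodset M (map (mul u') A) (map (mul v') B).
  rewrite /prodset allpairs_mapl allpairs_mapr map_allpairs.
  by apply: eq_allpairs => a b; rewrite mulACA'.
have [m [hm _]] := fd_sub (subsp_spanl (map (mul v') B)) (fun x hx => hx).
rewrite (vdim_eq hm); apply: core => //.
- rewrite kspanE in hu; case: hu => c hc; exists c.
  by rewrite -hu'' hc mul_lc_r.
- rewrite kspanE in hv; case: hv => c hc; exists c.
  by rewrite -hv'' hc mul_lc_r.
Qed.

End Alg.

Theorem corollary4p3 (R : realType) :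
  (forall (V : completeNormedModType R) (M : comBanachAlg V),
     only_fd_subalg_is_k M ->
     forall A B : seq V,
       (exists u, kspan A u /\ is_unit M u) -> (exists v, kspan B v /\ is_unit M v) ->
       (dimk A + dimk B <= dimk (prodset M A B) + 1)%N) /\
  (forall (V : completeNormedModType R[i]) (M : comBanachAlg V),
     only_fd_subalg_is_k M ->
     forall A B : seq V,
       (exists u, kspan A u /\ is_unit M u) -> (exists v, kspan B v /\ is_unit M v) ->
       (dimk A + dimk B <= dimk (prodset M A B) + 1)%N).
Proof.
by split=> V M hfd A B hu hv; apply: main_gen.
Qed.
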